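(* Let $n,m\ge 3$ and let $G=P_n\square P_m$ be the grid graph. A set $M$ of vertices of $G$ of cardinality $k>3$ is a $k$-minimal if all of the following hold: (i) $M$ contains at most one corner vertex; (ii) $M$ contains two boundary vertices $u$ and $v$ lying on opposite sides of the grid that are not on the same line, and $M$ contains no other pair of vertices lying on opposite sides; (iii) if $u$ and $v$ lie on horizontal sides, there is a minimal horizontal line segment path between $u$ and $v$ with respect to $M$; otherwise there is a minimal vertical line segment path between $u$ and $v$ with respect to $M$.
   Context: The grid graph $P_n\square P_m$ has vertex set $\{(i,j):0\le i\le n-1,\ 0\le j\le m-1\}$, with $(i,j)$ adjacent to $(k,l)$ iff $|i-k|+|j-l|=1$; the distance is $d((i,j),(k,l))=|i-k|+|j-l|$. The first coordinate is the horizontal coordinate, the second the vertical coordinate. A vertex $w$ resolves $u,v$ if $d(w,u)\ne d(w,v)$; a set $R$ is resolving if every pair of distinct vertices is resolved by some vertex of $R$; a $k$-minimal is a resolving set $R$ of cardinality $k$ such that no $R\setminus\{x\}$, $x\in R$, is resolving. Corner vertices have degree 2, side vertices degree 3; boundary vertices are corner or side vertices. A horizontal line is the set of vertices with a fixed vertical coordinate, a vertical line the set of vertices with a fixed horizontal coordinate; two vertices are on the same line if they share a coordinate. The sides are the four lines with first coordinate $0$ or $n-1$ (vertical sides) or second coordinate $0$ or $m-1$ (horizontal sides); two sides are opposite if they share no vertex; two vertices lie on opposite sides if one lies on a side and the other on the opposite side. A line segment between two vertices $a,b$ on the same line is the unique shortest path between them (horizontal or vertical according to the line). Given a set $R$ of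 vertices and $u,v\in R$, a horizontal line segment path between $u$ and $v$ with respect to $R$ is a shortest path from $u$ to $v$ that uses only the horizontal line segments between vertices of $R$ (lying on a common horizontal line) and the vertical lines intersecting these line segments; a vertex $w\in R$ with no other vertex of $R$ on its horizontal line counts as a horizontal line segment of length one. It is minimal if it exists with respect to $R$ but no horizontal line segment path between $u$ and $v$ exists with respect to $R\setminus\{w\}$ for any $w\in R$. Vertical line segment paths and their minimality are defined analogously, with vertical line segments between vertices of $R$ and the horizontal lines intersecting them. *)

(* Defs.v *)
From mathcomp Require Import all_boot.
Set Implicit Arguments. Unset Strict Implicit. Unset Printing Implicit Defensive.

Section Grid.
Variables n m : nat.

Definition gvert := ('I_n * 'I_m)%type.

Definition absd (a b : nat) : nat := (a - b) + (b - a).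

Definition gdist (a b : gvert) : nat := absd a.1 b.1 + absd a.2 b.2.

Definition gadj (a b : gvert) : bool := gdist a b == 1.

Definition resolves (w a b : gvert) : bool := gdist w a != gdist w b.

Definition resolving (R : {set gvert}) : Prop :=
  forall a b : gvert, a != b -> exists2 w, w \in R & resolves w a b.

Definition kminimal (k : nat) (R : {set gvert}) : Prop :=
  [/\ resolving R, #|R| = k & forall x, x \in R -> ~ resolving (R :\ x)].

Definition is_corner (a : gvert) : bool :=
  ((a.1 == 0 :> nat) || (a.1 == n.-1 :> nat)) &&
  ((a.2 == 0 :> nat) || (a.2 == m.-1 :> nat)).

Definition is_boundary (a : gvert) : bool :=
  [|| a.1 == 0 :> nat, a.1 == n.-1 :> nat, a.2 == 0 :> nat | a.2 == m.-1 :> nat].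

Definition same_line (a b : gvert) : bool := (a.1 == b.1 :> nat) || (a.2 == b.2 :> nat).

Definition opp_vert_sides (a b : gvert) : bool :=
  ((a.1 == 0 :> nat) && (b.1 == n.-1 :> nat)) || ((a.1 == n.-1 :> nat) && (b.1 == 0 :> nat)).

Definition opp_horiz_sides (a b : gvert) : bool :=
  ((a.2 == 0 :> nat) && (b.2 == m.-1 :> nat)) || ((a.2 == m.-1 :> nat) && (b.2 == 0 :> nat)).

Definition opp_sides (a b : gvert) : bool := opp_vert_sides a b || opp_horiz_sides a b.

(* An edge a--b may be used w.r.t. R if either
   - it is horizontal (same vertical coordinate j) and lies inside the horizontal
     line segment between two vertices x, y of R on the horizontal line j; or
   - it is vertical (same horizontal coordinate i) and the vertical line i
     intersects some horizontal line segment between vertices x, y of R lying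
     on a common horizontal line (x = y allowed: a lone vertex of R counts as
     a segment of length one). *)
Definition hseg_step (R : {set gvert}) (a b : gvert) : bool :=
  gadj a b &&
  ( ((a.2 == b.2 :> nat) &&
      [exists x in R, exists y in R,
         [&& x.2 == a.2 :> nat, y.2 == a.2 :> nat,
             minn x.1 y.1 <= minn a.1 b.1 & maxn a.1 b.1 <= maxn x.1 y.1]])
    || ((a.1 == b.1 :> nat) &&
      [exists x in R, exists y in R,
         [&& x.2 == y.2 :> nat, minn x.1 y.1 <= a.1 & a.1 <= maxn x.1 y.1]]) ).

Definition vseg_step (R : {set gvert}) (a b : gvert) : bool :=
  gadj a b &&
  ( ((a.1 == b.1 :> nat) &&
      [exists x in R, exists y in R,
         [&& x.1 == a.1 :> nat, y.1 == a.1 :> nat,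
             minn x.2 y.2 <= minn a.2 b.2 & maxn a.2 b.2 <= maxn x.2 y.2]])
    || ((a.2 == b.2 :> nat) &&
      [exists x in R, exists y in R,
         [&& x.1 == y.1 :> nat, minn x.2 y.2 <= a.2 & a.2 <= maxn x.2 y.2]]) ).

Definition shortest_path_by (step : rel gvert) (u v : gvert) (s : seq gvert) : bool :=
  [&& path step u s, last u s == v & size s == gdist u v].

Definition hlsp_exists (R : {set gvert}) (u v : gvert) : Prop :=
  [/\ u \in R, v \in R & exists s, shortest_path_by (hseg_step R) u v s].

Definition vlsp_exists (R : {set gvert}) (u v : gvert) : Prop :=
  [/\ u \in R, v \in R & exists s, shortest_path_by (vseg_step R) u v s].

Definition minimal_hlsp (R : {set gvert}) (u v : gvert) : Prop :=
  hlsp_exists R u v /\ forall w, w \in R -> ~ hlsp_exists (R :\ w) u v.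

Definition minimal_vlsp (R : {set gvert}) (u v : gvert) : Prop :=
  vlsp_exists R u v /\ forall w, w \in R -> ~ vlsp_exists (R :\ w) u v.

End Grid.

(* Main.v *)
Require Import Defs.
From mathcomp Require Import all_boot.
From mathcomp Require Import zify.
Set Implicit Arguments. Unset Strict Implicit. Unset Printing Implicit Defensive.
Set Warnings "-notation-overridden".

Section Basic.
Variables n m : nat.
Implicit Types (a b x y p q : gvert n m) (R : {set gvert n m}).

Lemma gvert_eq a b : (a.1 : nat) = b.1 -> (a.2 : nat) = b.2 -> a = b.
Proof. by case: a b => [a1 a2] [b1 b2] /= /val_inj -> /val_inj ->. Qed.

Lemma gdistC a b : gdist a b = gdist b a.
Proof. rewrite /gdist /absd; lia. Qed.

Lemma gdist_tri a b c : gdist a c <= gdist a b + gdist b c.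
Proof. rewrite /gdist /absd; lia. Qed.

Lemma hseg_stepC R a b : hseg_step R a b = hseg_step R b a.
Proof.
rewrite /hseg_step /gadj gdistC; congr (_ && _).
rewrite (eq_sym (nat_of_ord a.2)) (eq_sym (nat_of_ord a.1)) (minnC b.1) (maxnC b.1).
case E2: (_ == _) => /=; first by move/eqP: E2 => ->; case E1: (_ == _) => //=; move/eqP: E1 => ->.
case E1: (_ == _) => //=; by move/eqP: E1 => ->.
Qed.
End Basic.


Section HH.
Variables n m : nat.
Variable a : nat.
Implicit Types (x y z : gvert n m) (R M : {set gvert n m}).

Definition trig R (h r : nat) := [exists y in R, (y.2 == r :> nat) && (y.1 <= h)].
Definition rmax R (r : nat) := \max_(x in R | x.2 == r :> nat) (x.1 : nat).
Definition hstep R h r := if trig R h r then maxn h (rmax R r) else h.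
Fixpoint hh R r := if r is r'.+1 then hstep R (hh R r') r else a.

Lemma trigP R h r : reflect (exists2 y : gvert n m, y \in R & (y.2 : nat) = r /\ y.1 <= h) (trig R h r).
Proof.
apply: (iffP existsP) => [[y /andP [yR /andP [/eqP ? ?]]]|[y yR [? ?]]]; first by exists y.
by exists y; rewrite yR /=; apply/andP; split => //; apply/eqP.
Qed.

Lemma rmax_ge R r x : x \in R -> (x.2 : nat) = r -> x.1 <= rmax R r.
Proof. by move=> xR xr; rewrite /rmax; apply: (leq_bigmax_cond x); rewrite xR xr eqxx. Qed.

Lemma rmax_att R r : (exists2 y : gvert n m, y \in R & (y.2 : nat) = r) ->
  exists2 z : gvert n m, z \in R & (z.2 : nat) = r /\ (z.1 : nat) = rmax R r.
Proof.
move=> [y yR yr].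
have Hc : 0 < #|[pred x in R | x.2 == r :> nat]|.
  by apply/card_gt0P; exists y; rewrite inE yR yr eqxx.
have [z] := @eq_bigmax_cond _ [pred x in R | x.2 == r :> nat] (fun x => (x.1 : nat)) Hc.
rewrite inE => /andP [zR /eqP zr] E.
by exists z => //; split => //; rewrite /rmax E.
Qed.

Lemma hstep_ge R h r : h <= hstep R h r.
Proof. by rewrite /hstep; case: ifP => // _; apply: leq_maxl. Qed.

Lemma hstep_mono R h h' r : h <= h' -> hstep R h r <= hstep R h' r.
Proof.
move=> hh'; rewrite /hstep; case: (trigP R h r) => [[y yR [yr yh]]|_].
  have -> : trig R h' r by apply/trigP; exists y => //; split => //; lia.
  lia.
by apply: leq_trans (hstep_ge R h' r).
Qed.

Lemma hstep_gt R h r : h < hstep R h r -> trig R h r /\ hstep R h r = rmax R r.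
Proof. rewrite /hstep; case: ifP => // _; lia. Qed.

Lemma hh_mono R r r' : r <= r' -> hh R r <= hh R r'.
Proof.
move=> /subnK <-; elim: (r' - r) => //= k IH.
by apply: leq_trans IH (hstep_ge _ _ _).
Qed.

Lemma hstep_cmp M R h r :
  (forall z, z \in M -> (z.2 : nat) = r -> trig M h r ->
     z.1 <= h \/ (trig R h r /\ exists2 z' : gvert n m, z' \in R & (z'.2 : nat) = r /\ z.1 <= z'.1)) ->
  hstep M h r <= hstep R h r.
Proof.
move=> H; rewrite {1}/hstep; case: ifP => tM; last exact: hstep_ge.
rewrite geq_max hstep_ge /rmax; apply/bigmax_leqP => z /andP [zM /eqP zr].
case: (H z zM zr tM) => [zh|[tR [z' z'R [z'r zz']]]]; first by apply: leq_trans zh (hstep_ge _ _ _).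
rewrite /hstep tR; apply: leq_trans zz' _; apply: leq_trans (leq_maxr _ _).
exact: rmax_ge.
Qed.

Lemma hstep_same M R h r :
  (forall y, (y.2 : nat) = r -> (y \in M) = (y \in R)) -> hstep M h r = hstep R h r.
Proof.
move=> H; rewrite /hstep /trig /rmax.
have -> : [exists y in M, (y.2 == r :> nat) && (y.1 <= h)] = [exists y in R, (y.2 == r :> nat) && (y.1 <= h)].
  apply: eq_existsb => y; case E: (y.2 == r :> nat); last by rewrite !andbF.
  by rewrite H //; apply/eqP.
congr (if _ then maxn _ _ else _); apply: eq_bigl => y.
case E: (y.2 == r :> nat); last by rewrite !andbF.
by rewrite H //; apply/eqP.
Qed.

Lemma hh_eq_below M R s :
  (forall r, 0 < r -> r < s -> forall h, hstep M h r = hstep R h r) ->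
  forall r, r < s -> hh M r = hh R r.
Proof.
move=> H; elim=> //= r IH rs; rewrite IH; last lia.
by apply: H; lia.
Qed.

Lemma hh_le_after M R s :
  (forall r, s < r -> forall h, hstep M h r = hstep R h r) ->
  hh M s <= hh R s -> forall r, s <= r -> hh M r <= hh R r.
Proof.
move=> H Hs r /subnK <-; elim: (r - s) => //= k IH.
rewrite H; last lia.
exact: hstep_mono.
Qed.

End HH.


Section Reach.
Variables n m : nat.
Variables u v : gvert n m.
Implicit Types (x y z p q : gvert n m) (R M : {set gvert n m}).

Lemma hseg_adj R x y : hseg_step R x y -> gdist x y = 1.
Proof. by case/andP => /eqP. Qed.

Lemma path_len R x s : path (hseg_step R) x s -> gdist x (last x s) <= size s.
Proof.
elim: s x => [|y s IH] x /=; first by rewrite /gdist /absd; lia.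
case/andP => /hseg_adj xy /IH H; have := gdist_tri x y (last y s); lia.
Qed.

Lemma hseg_right R x y : hseg_step R x y -> (x.1 : nat) <> y.1 ->
  exists2 x' : gvert n m, x' \in R & exists2 y' : gvert n m, y' \in R &
   [/\ (x'.2 : nat) = x.2, (y'.2 : nat) = x.2, minn x'.1 y'.1 <= minn x.1 y.1 & maxn x.1 y.1 <= maxn x'.1 y'.1].
Proof.
move=> /andP [_ /orP [/andP [_ /existsP [x' /andP [x'R /existsP [y' /andP [y'R H]]]]]|/andP [/eqP E _]]] //.
exists x' => //; exists y' => //; move: H => /and4P [/eqP ? /eqP ? ? ?]; by split.
Qed.

Hypothesis Hu2 : (u.2 : nat) = 0.
Hypothesis Hv2 : (v.2 : nat) = m.-1.

Lemma sound_gen R : (forall x, x \in R -> (x.2 : nat) = 0 -> x = u) ->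
  forall s x0, path (hseg_step R) x0 s -> last x0 s = v -> size s = gdist x0 v ->
  x0.1 <= v.1 -> x0.1 <= hh u.1 R x0.2 -> v.1 <= hh u.1 R m.-1.
Proof.
move=> Hrow0; elim=> [|y s IH] x0 /=.
  by move=> _ E _ _; rewrite -Hv2 -E.
case/andP => st pth lst sz x0b x0h.
have l1 := path_len pth; rewrite lst in l1.
have l2 := gdist_tri x0 y v.
have l3 := hseg_adj st.
have o1 := ltn_ord x0.2; have o2 := ltn_ord y.2; have o3 := ltn_ord x0.1; have o4 := ltn_ord y.1.
have mv : ((y.1 : nat) = x0.1 + 1 /\ (y.2 : nat) = x0.2 /\ x0.1 < v.1) \/ ((y.1 : nat) = x0.1 /\ (y.2 : nat) = x0.2 + 1).
  move: l1 l2 l3 sz; rewrite /gdist /absd Hv2; lia.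
apply: (IH y pth lst); first by move: l1 l2 l3 sz; rewrite /gdist; lia.
  case: mv => [[-> [_ ?]]|[-> _]]; lia.
case: mv => [[y1 [y2 xb]]|[y1 y2]]; last first.
  rewrite y1 y2; apply: leq_trans x0h _; apply: hh_mono; lia.
have [x' x'R [y' y'R [ex ey mn mx]]] := hseg_right st (ltac:(lia)).
rewrite y2 y1.
move Er: (nat_of_ord x0.2) x0h ex ey => r x0h ex ey.
case: r Er x0h ex ey => [|r] Er x0h ex ey.
  have := Hrow0 _ x'R ex; have := Hrow0 _ y'R ey => E1 E2; subst x' y'; lia.
move: x0h => /=; set H := hh u.1 R r => x0h.
have Hmax : maxn x'.1 y'.1 <= rmax R r.+1.
  by rewrite geq_max !rmax_ge.
case: (leqP x0.1 H) => xH.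
  have tr : trig R H r.+1.
    apply/trigP; case: (leqP x'.1 y'.1) => c.
      by exists x' => //; split; lia.
    by exists y' => //; split; lia.
  rewrite /hstep tr; lia.
have [_ E] := hstep_gt (ltac:(lia) : H < hstep R H r.+1).
lia.
Qed.

Lemma sound R s : (forall x, x \in R -> (x.2 : nat) = 0 -> x = u) ->
  u.1 <= v.1 -> shortest_path_by (hseg_step R) u v s -> v.1 <= hh u.1 R m.-1.
Proof.
move=> H uv /and3P [p /eqP l /eqP sz]; apply: (sound_gen H p l sz uv).
by rewrite Hu2.
Qed.

Lemma reach_cov R : u \in R -> forall r c, u.1 <= c <= hh u.1 R r ->
  exists2 x : gvert n m, x \in R & exists2 y : gvert n m, y \in R & (x.2 : nat) = y.2 /\ minn x.1 y.1 <= c <= maxn x.1 y.1.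
Proof.
move=> uR; elim=> [|r IH] c /=.
  move=> H; exists u => //; exists u => //; split => //; lia.
case: (leqP c (hh u.1 R r)) => cr H.
  apply: IH; lia.
have [tr E] := hstep_gt (ltac:(lia) : hh u.1 R r < hstep R (hh u.1 R r) r.+1).
move/trigP: tr => [y yR [yr yh]].
have [z zR [zr zm]] := rmax_att (ex_intro2 _ _ y yR yr).
exists y => //; exists z => //; split; first by rewrite yr zr.
lia.
Qed.

Definition Reach R p := exists s, shortest_path_by (hseg_step R) u p s.

Lemma Reach_step R p q : Reach R p -> hseg_step R p q -> gdist u q = (gdist u p).+1 -> Reach R q.
Proof.
move=> [s /and3P [pth /eqP l /eqP sz]] st d; exists (rcons s q).
by rewrite /shortest_path_by rcons_path pth l st last_rcons size_rcons sz d !eqxx.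
Qed.

Lemma reach_all R : u \in R -> forall r p, (p.2 : nat) = r -> u.1 <= p.1 <= hh u.1 R r -> Reach R p.
Proof.
move=> uR; elim=> [|r IH] p pr /=.
  move=> H; have -> : p = u by apply: gvert_eq; lia.
  by exists [::]; rewrite /shortest_path_by /= eqxx /gdist /absd; lia.
have Hr : r < m by have := ltn_ord p.2; lia.
have up : forall q, (q.2 : nat) = r.+1 -> u.1 <= q.1 <= hh u.1 R r -> Reach R q.
  move=> q qr qh; pose q0 : gvert n m := (q.1, Ordinal Hr).
  apply: (@Reach_step _ q0); first by apply: IH.
    have [x xR [y yR [xy H]]] := reach_cov uR qh.
    apply/andP; split; first by rewrite /gadj /gdist /absd /= qr; apply/eqP; lia.
    apply/orP; right; rewrite eqxx /=; apply/existsP; exists x; rewrite xR /=.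
    by apply/existsP; exists y; rewrite yR /= xy eqxx /=; apply/andP; lia.
  rewrite /gdist /absd /= qr Hu2; lia.
move=> H; case: (leqP p.1 (hh u.1 R r)) => pr'; first by apply: up => //; lia.
have [tr E] := hstep_gt (ltac:(lia) : hh u.1 R r < hstep R (hh u.1 R r) r.+1).
move/trigP: tr => [y yR [yr yh]].
have [z zR [zr zm]] := rmax_att (ex_intro2 _ _ y yR yr).
have ha : u.1 <= hh u.1 R r by have := @hh_mono _ _ u.1 R 0 r (leq0n r).
have Hn : forall c, c < n -> hh u.1 R r <= c -> c <= hh u.1 R r.+1 ->
   forall q, (q.2 : nat) = r.+1 -> (q.1 : nat) = c -> Reach R q.
  elim=> [|c IHc] cn c1 c2 q qr qc.
    apply: up => //; move: H; rewrite qc; lia.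
  case: (leqP c.+1 (hh u.1 R r)) => cc; first by apply: up => //; move: H; rewrite qc; lia.
  have cn' : c < n by lia.
  pose q0 : gvert n m := (Ordinal cn', q.2).
  apply: (@Reach_step _ q0); first by apply: (IHc cn') => //; lia.
    apply/andP; split; first by rewrite /gadj /gdist /absd /= qc; apply/eqP; lia.
    apply/orP; left; rewrite eqxx /=; apply/existsP; exists y; rewrite yR /=.
    apply/existsP; exists z; rewrite zR /= yr zr qr eqxx /= qc.
    simpl in E; apply/andP; split; first lia.
    move: c2 => /=; rewrite E -zm; lia.
  rewrite /gdist /absd /= qc; lia.
apply: (Hn p.1 (ltn_ord p.1)) => //; [lia | by move: H => /andP []].
Qed.

Lemma complete R : u \in R -> v \in R -> u.1 <= v.1 -> v.1 <= hh u.1 R m.-1 -> hlsp_exists R u v.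
Proof.
move=> uR vR uv vh; split => //.
have [s H] := reach_all uR Hv2 (ltac:(lia)).
by exists s.
Qed.

End Reach.


Lemma ar1 a b p1 q1 p2 q2 M : p1 < q1 -> a < b -> p2 <= M -> q2 <= M ->
  absd a p1 + p2 = absd a q1 + q2 -> absd b p1 + (M - p2) = absd b q1 + (M - q2) ->
  maxn p1 a < q1 /\ maxn p1 a < b.
Proof. rewrite /absd => *. lia. Qed.
Lemma ar2 X Y p1 q1 A B c : p1 <= c -> c < q1 -> minn X Y <= c -> c < maxn X Y ->
  absd X p1 + A = absd X q1 + B -> absd Y p1 + A = absd Y q1 + B -> False.
Proof. rewrite /absd => *. lia. Qed.
Lemma absd0 x : absd 0 x = x. Proof. rewrite /absd; lia. Qed.
Lemma absdM M x : x <= M -> absd M x = M - x. Proof. rewrite /absd; lia. Qed.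
Lemma ar3 z1 z2 c r : (z1 <= c /\ z2 <= r) \/ (c < z1 /\ r < z2) ->
  absd z1 c + absd z2 r.+1 = absd z1 c.+1 + absd z2 r.
Proof. rewrite /absd; lia. Qed.


Section Core.
Variables n m : nat.
Implicit Types (x y z p q w : gvert n m) (R M : {set gvert n m}).

Lemma notres R p q : p != q -> (forall x, x \in R -> gdist x p = gdist x q) -> ~ resolving R.
Proof. move=> pq H res; have [w wR] := res _ _ pq; by rewrite /resolves H // eqxx. Qed.

Lemma partB R (r0 r1 : 'I_m) :
  (forall x, x \in R -> absd x.2 r0 = (absd x.2 r1).+1) ->
  ~~ [exists x in R, x.1 == 0 :> nat] || ~~ [exists x in R, x.1 == n.-1 :> nat] ->
  1 < n -> ~ resolving R.
Proof.
move=> Hr Hc n1; have n0 : 0 < n by lia.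
have n2 : 1 < n by lia.
case/orP: Hc => /existsPn Hc.
  pose p : gvert n m := (Ordinal n2, r0). pose q : gvert n m := (Ordinal n0, r1).
  apply: (@notres _ p q).
    apply/eqP => /(congr1 (fun z => nat_of_ord z.1)) /=; lia.
  move=> x xR; have := Hc x; rewrite xR /= => /eqP x0; have := Hr _ xR.
  rewrite /gdist /absd /=; lia.
have n3 : n.-2 < n by lia.
have n4 : n.-1 < n by lia.
pose p : gvert n m := (Ordinal n3, r0). pose q : gvert n m := (Ordinal n4, r1).
apply: (@notres _ p q).
  apply/eqP => /(congr1 (fun z => nat_of_ord z.1)) /=; lia.
move=> x xR; have := Hc x; rewrite xR /= => /eqP x0; have := Hr _ xR.
have := ltn_ord x.1.
rewrite /gdist /absd /=; lia.
Qed.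

Lemma cross R s c : forall x0, path (hseg_step R) x0 s -> x0.1 <= c -> c < (last x0 s).1 ->
  exists x, exists y, hseg_step R x y /\ x.1 <= c < y.1.
Proof.
elim: s => [|y s IH] x0 /=; first lia.
case/andP => st pth x0c cl; case: (leqP y.1 c) => yc.
  exact: (IH y pth yc cl).
by exists x0, y; split => //; lia.
Qed.

Variables (M : {set gvert n m}) (u v : gvert n m).
Hypothesis Hu2 : (u.2 : nat) = 0.
Hypothesis Hv2 : (v.2 : nat) = m.-1.
Hypothesis Hab : u.1 < v.1.
Hypothesis Hm : 2 < m.
Hypothesis Hopp : forall x y, x \in M -> y \in M -> opp_sides x y ->
        (x = u /\ y = v) \/ (x = v /\ y = u).
Hypothesis Hmin : minimal_hlsp M u v.

Lemma uM : u \in M. Proof. by case: Hmin => [[]]. Qed.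
Lemma vM : v \in M. Proof. by case: Hmin => [[]]. Qed.
Lemma uv : u != v.
Proof. apply/eqP => E; move: Hab; rewrite E; lia. Qed.

Lemma row0 x : x \in M -> (x.2 : nat) = 0 -> x = u.
Proof.
move=> xM x0; case: (Hopp xM vM _) => [|[]|[-> ->]] //.
by rewrite /opp_sides /opp_horiz_sides x0 Hv2 !eqxx orbT.
Qed.

Lemma rowT x : x \in M -> (x.2 : nat) = m.-1 -> x = v.
Proof.
move=> xM x0; case: (Hopp uM xM _) => [|[]|[-> ->]] //.
by rewrite /opp_sides /opp_horiz_sides x0 Hu2 !eqxx orbT.
Qed.

Lemma hM : v.1 <= hh u.1 M m.-1.
Proof.
case: Hmin => [[_ _ [s sp]] _]; apply: (sound Hu2 Hv2 _ _ sp); last lia.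
exact: row0.
Qed.

Lemma hR x : x \in M -> x != u -> x != v -> hh u.1 (M :\ x) m.-1 < v.1.
Proof.
move=> xM xu xv; rewrite ltnNge; apply/negP => H.
case: Hmin => _ /(_ x xM); apply; apply: complete => //; try lia.
- by rewrite !inE eq_sym xu uM.
- by rewrite !inE eq_sym xv vM.
Qed.

Lemma partA : resolving M.
Proof.
have resC : forall w p q, resolves w p q = resolves w q p by move=> *; rewrite /resolves eq_sym.
have key : forall p q, (p.1 : nat) < q.1 -> gdist u p = gdist u q -> gdist v p = gdist v q ->
    exists2 w, w \in M & resolves w p q.
  move=> p q pq du dv.
  have hp := ltn_ord p.2; have hq := ltn_ord q.2.
  have e1 : absd v.2 p.2 = m.-1 - p.2 by rewrite Hv2 absdM //; lia.
  have e2 : absd v.2 q.2 = m.-1 - q.2 by rewrite Hv2 absdM //; lia.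
  move: du dv; rewrite /gdist e1 e2 Hu2 !absd0 => du dv.
  have [cq cb] := @ar1 u.1 v.1 p.1 q.1 p.2 q.2 m.-1 pq Hab (ltac:(lia)) (ltac:(lia)) du dv.
  case: Hmin => [[_ _ [s /and3P [pth /eqP lst _]]] _].
  have := cross pth (leq_maxr p.1 u.1); rewrite lst => /(_ cb) [x [y [st xy]]].
  have [x' x'R [y' y'R [ex ey mn mx]]] := hseg_right st (ltac:(lia)).
  case: (boolP (resolves x' p q)) => rx; first by exists x'.
  case: (boolP (resolves y' p q)) => ry; first by exists y'.
  move: rx ry; rewrite /resolves !negbK => /eqP rx /eqP ry.
  move: rx ry; rewrite /gdist ex ey => rx ry.
  exfalso; apply: (@ar2 x'.1 y'.1 p.1 q.1 _ _ (maxn p.1 u.1) (leq_maxl _ _) cq _ _ rx ry); lia.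
move=> p q pq.
case: (boolP (resolves u p q)) => ru; first by exists u => //; exact: uM.
case: (boolP (resolves v p q)) => rv; first by exists v => //; exact: vM.
move: ru rv; rewrite /resolves !negbK => /eqP du /eqP dv.
have hp := ltn_ord p.2; have hq := ltn_ord q.2.
case: (ltngtP p.1 q.1) => c.
- exact: key.
- have [w wM rw] := key q p c (esym du) (esym dv); by exists w => //; move: rw; rewrite /resolves eq_sym.
- move: du; rewrite /gdist Hu2 !absd0 c => du.
  have E : p = q by apply: gvert_eq => //; lia.
  by rewrite E eqxx in pq.
Qed.

Lemma partBu : ~ resolving (M :\ u).
Proof.
have m1 : 1 < m by lia.
apply: (@partB _ u.2 (Ordinal m1)).
- move=> x; rewrite !inE => /andP [xu xM]; rewrite Hu2 /=.
  have : (x.2 : nat) <> 0 by move=> /(row0 xM) E; rewrite E eqxx in xu.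
  rewrite /absd; lia.
- rewrite -negb_and; apply/negP => /andP [/existsP [x /andP [xR /eqP x0]] /existsP [y /andP [yR /eqP yn]]].
  move: xR yR; rewrite !inE => /andP [xu xM] /andP [yu yM].
  case: (Hopp xM yM _) => [|[E _]|[_ E]].
  + by rewrite /opp_sides /opp_vert_sides x0 yn !eqxx.
  + by rewrite E eqxx in xu.
  + by rewrite E eqxx in yu.
- have := ltn_ord v.1; lia.
Qed.

Lemma partBv : ~ resolving (M :\ v).
Proof.
have m1 : m.-2 < m by lia.
apply: (@partB _ v.2 (Ordinal m1)).
- move=> x; rewrite !inE => /andP [xv xM]; rewrite Hv2 /=.
  have : (x.2 : nat) <> m.-1 by move=> /(rowT xM) E; rewrite E eqxx in xv.
  have := ltn_ord x.2.
  rewrite /absd; lia.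
- rewrite -negb_and; apply/negP => /andP [/existsP [x /andP [xR /eqP x0]] /existsP [y /andP [yR /eqP yn]]].
  move: xR yR; rewrite !inE => /andP [xu xM] /andP [yu yM].
  case: (Hopp xM yM _) => [|[_ E]|[E _]].
  + by rewrite /opp_sides /opp_vert_sides x0 yn !eqxx.
  + by rewrite E eqxx in yu.
  + by rewrite E eqxx in xu.
- have := ltn_ord v.1; lia.
Qed.

Lemma same_rows x r h : (r != x.2 :> nat) -> hstep M h r = hstep (M :\ x) h r.
Proof.
move=> rx; apply: hstep_same => y yr; rewrite !inE.
case: eqP => [E|] //; by rewrite -E yr eqxx in rx.
Qed.

Lemma hh_remove x s : (x.2 : nat) = s.+1 ->
  hh u.1 M s.+1 <= hh u.1 (M :\ x) s.+1 -> hh u.1 M m.-1 <= hh u.1 (M :\ x) m.-1.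
Proof.
move=> xs H; have sm := ltn_ord x.2.
apply: (hh_le_after _ H); last lia.
move=> r sr h; apply: same_rows; lia.
Qed.

Lemma hh_below x s : (x.2 : nat) = s.+1 -> hh u.1 M s = hh u.1 (M :\ x) s.
Proof.
move=> xs; apply: (@hh_eq_below _ _ _ _ _ s.+1) => //.
move=> r _ rs h; apply: same_rows; lia.
Qed.

Lemma ess x s : x \in M -> (x.2 : nat) = s.+1 -> s.+1 < m.-1 ->
  hstep M (hh u.1 M s) s.+1 <= hstep (M :\ x) (hh u.1 M s) s.+1 -> False.
Proof.
move=> xM xs sm H.
have xu : x != u by apply/eqP => E; move: xs; rewrite E Hu2.
have xv : x != v by apply/eqP => E; move: xs sm; rewrite E Hv2; lia.
have := hR xM xu xv; have := hM.
suff : hh u.1 M m.-1 <= hh u.1 (M :\ x) m.-1 by lia.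
apply: (hh_remove xs) => /=; by rewrite -(hh_below xs).
Qed.

Lemma hstep_le_max R h r : hstep R h r <= maxn h (rmax R r).
Proof. by rewrite /hstep; case: ifP => // _; apply: leq_maxl. Qed.

Lemma mid_ess (l mid hi : gvert n m) s : l \in M -> mid \in M -> hi \in M ->
  (l.2 : nat) = s.+1 -> (mid.2 : nat) = s.+1 -> (hi.2 : nat) = s.+1 -> s.+1 < m.-1 ->
  l.1 < mid.1 -> mid.1 < hi.1 -> l.1 <= hh u.1 M s -> False.
Proof.
move=> lM mM hM' ls ms hs sm lm mh lh.
apply: (ess mM ms sm); apply: hstep_cmp => z zM zs _; right.
have lmid : l != mid by apply/eqP => E; move: lm; rewrite E; lia.
have hmid : hi != mid by apply/eqP => E; move: mh; rewrite E; lia.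
split.
  by apply/trigP; exists l; [rewrite !inE lmid lM | split].
case: (eqVneq z mid) => [->|zm].
  by exists hi; [rewrite !inE hmid hM' | split => //; lia].
by exists z; [rewrite !inE zm zM | split].
Qed.

Lemma partC w : w \in M -> w != u -> w != v -> ~ resolving (M :\ w).
Proof.
move=> wM wu wv.
have w0 : (w.2 : nat) <> 0 by move=> /(row0 wM) E; rewrite E eqxx in wu.
have wT : (w.2 : nat) <> m.-1 by move=> /(rowT wM) E; rewrite E eqxx in wv.
have wm := ltn_ord w.2.
move Ew : (w.2 : nat) w0 wT => rho w0 wT.
case: rho Ew w0 wT => [//|r] Ew _ wT.
set c := hh u.1 M r.
have hRc : hh u.1 (M :\ w) r = c by rewrite /c (hh_below Ew).
have F2v : c < v.1.
  rewrite ltnNge; apply/negP => vc.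
  have := hR wM wu wv; have := @hh_mono _ _ u.1 (M :\ w) r m.-1 (ltac:(lia)); lia.
have F1 : forall x, x \in M -> x != w -> (x.2 : nat) <= r -> x.1 <= c.
  move=> x xM xw xr.
  case: (eqVneq x u) => [->|xu].
    by have := @hh_mono _ _ u.1 M 0 r (leq0n r).
  have x0 : (x.2 : nat) <> 0 by move=> /(row0 xM) E; rewrite E eqxx in xu.
  move Ex : (x.2 : nat) x0 xr => s x0 xr; case: s Ex x0 xr => [//|s] Ex _ xr.
  rewrite leqNgt; apply/negP => cx.
  apply: (ess xM Ex (ltac:(lia))); apply: hstep_cmp => z zM zs tM; exfalso.
  have h1 : hh u.1 M s.+1 <= c by apply: hh_mono.
  move: h1 => /=; rewrite /hstep tM => h1.
  have := rmax_ge xM Ex; lia.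
have F2 : forall x, x \in M -> x != w -> r.+1 < x.2 -> c < x.1.
  move=> x xM xw xr; rewrite ltnNge; apply/negP => xc.
  case: (eqVneq x v) => [E|xv]; first by move: xc; rewrite E; lia.
  have xT : (x.2 : nat) <> m.-1 by move=> /(rowT xM) E; rewrite E eqxx in xv.
  have xm := ltn_ord x.2.
  move Ex : (x.2 : nat) xr xT => s xr xT; case: s Ex xr xT => [//|s] Ex xr xT.
  have cH : c <= hh u.1 M s by apply: hh_mono; lia.
  case: (leqP (rmax M s.+1) (hh u.1 M s)) => rH.
    apply: (ess xM Ex (ltac:(lia))); apply: hstep_cmp => z zM zs _; left.
    have := rmax_ge zM zs; lia.
  have := hR wM wu wv; have := hM.
  suff : hh u.1 M m.-1 <= hh u.1 (M :\ w) m.-1 by lia.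
  apply: (@hh_le_after _ _ _ _ _ s.+1); last lia.
    move=> r' sr h; apply: same_rows; lia.
  have [z zM [zs zm]] := rmax_att (ex_intro2 _ _ x xM Ex).
  have zR : z \in M :\ w by rewrite !inE zM andbT; apply/eqP => E; move: zs; rewrite E Ew; lia.
  have xR : x \in M :\ w by rewrite !inE xw xM.
  have tR : trig (M :\ w) (hh u.1 (M :\ w) s) s.+1.
    apply/trigP; exists x => //; split => //.
    apply: leq_trans xc _; rewrite -hRc; apply: hh_mono; lia.
  have h2 : rmax M s.+1 <= hstep (M :\ w) (hh u.1 (M :\ w) s) s.+1.
    rewrite /hstep tR -zm; apply: leq_trans (leq_maxr _ _); exact: rmax_ge zR zs.
  rewrite /=; apply: leq_trans (hstep_le_max _ _ _) _; rewrite geq_max h2 andbT.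
  exact: leq_trans (ltnW rH) h2.
have sm : r.+1 < m.-1 by lia.
have F3 : forall x y, x \in M -> y \in M -> x != w -> y != w -> (x.2:nat) = r.+1 -> (y.2:nat) = r.+1 ->
    x.1 <= c -> c < y.1 -> False.
  move=> x y xM yM xw yw xr yr xc cy.
  have wx : (w.1 : nat) <> x.1.
    by move=> E; move: xw; rewrite (@gvert_eq _ _ x w) ?eqxx //; rewrite xr Ew.
  have wy : (w.1 : nat) <> y.1.
    by move=> E; move: yw; rewrite (@gvert_eq _ _ y w) ?eqxx //; rewrite yr Ew.
  case: (ltngtP w.1 x.1) => [wlx|xlw|//].
    by apply: (mid_ess wM xM yM Ew xr yr sm wlx); lia.
  case: (ltngtP w.1 y.1) => [wly|ylw|//].
    exact: (mid_ess xM wM yM xr Ew yr sm xlw wly xc).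
  by apply: (mid_ess xM yM wM xr yr Ew sm _ ylw xc); lia.
have cn : c < n by have := ltn_ord v.1; lia.
have c1n : c.+1 < n by have := ltn_ord v.1; lia.
have r1 : r.+1 < m by lia.
have r2 : r.+2 < m by lia.
have r0 : r < m by lia.
case: (boolP [exists z in M :\ w, (z.2 == r.+1 :> nat) && (z.1 <= c)]) => ex.
  pose p : gvert n m := (Ordinal cn, Ordinal r2).
  pose q : gvert n m := (Ordinal c1n, Ordinal r1).
  apply: (@notres _ p q).
    by apply/eqP => /(congr1 (fun z => nat_of_ord z.1)) /=; lia.
  move=> z; rewrite !inE => /andP [zw zM]; rewrite /gdist /=; apply: ar3.
  case: (ltngtP z.2 r.+1) => zr.
  - left; split; [apply: F1 => //; lia | lia].
  - right; split; [apply: F2 => //; lia | lia].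
  - left; split; last lia.
    rewrite leqNgt; apply/negP => cz.
    move/existsP: ex => [x /andP [xR /andP [/eqP xr xc]]].
    move: xR; rewrite !inE => /andP [xw xM].
    exact: (F3 x z xM zM xw zw xr zr xc cz).
pose p : gvert n m := (Ordinal cn, Ordinal r1).
pose q : gvert n m := (Ordinal c1n, Ordinal r0).
apply: (@notres _ p q).
  by apply/eqP => /(congr1 (fun z => nat_of_ord z.1)) /=; lia.
move=> z; rewrite !inE => /andP [zw zM]; rewrite /gdist /=; apply: ar3.
case: (ltngtP z.2 r.+1) => zr.
- left; split; [apply: F1 => //; lia | lia].
- right; split; [apply: F2 => //; lia | lia].
- right; split; last lia.
  rewrite ltnNge; apply/negP => zc.
  move/existsPn: ex => /(_ z); rewrite !inE zw zM zr eqxx zc.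
  by [].
Qed.

Lemma core_kmin : kminimal #|M| M.
Proof.
split => //; first exact: partA.
move=> x xM; case: (eqVneq x u) => [->|xu]; first exact: partBu.
case: (eqVneq x v) => [->|xv]; first exact: partBv.
exact: partC.
Qed.

End Core.


Definition lsp_exists n m (S : {set gvert n m} -> rel (gvert n m)) (R : {set gvert n m}) (u v : gvert n m) :=
  [/\ u \in R, v \in R & exists s, shortest_path_by (S R) u v s].

Section Transport.
Variables n m n' m' : nat.
Variable f : gvert n m -> gvert n' m'.
Variable g : gvert n' m' -> gvert n m.
Hypothesis fK : cancel f g.
Hypothesis gK : cancel g f.
Hypothesis iso : forall x y, gdist (f x) (f y) = gdist x y.

Lemma finj : injective f. Proof. exact: can_inj fK. Qed.

Lemma imsetD1f (A : {set gvert n m}) x : f @: (A :\ x) = f @: A :\ f x.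
Proof.
apply/setP => y; rewrite !inE; apply/imsetP/andP.
  move=> [z]; rewrite !inE => /andP [zx zA] ->; split; last exact: imset_f.
  by apply: contra zx => /eqP /finj ->.
move=> [yx /imsetP [z zA E]]; exists z => //; rewrite !inE zA andbT.
by apply: contra yx => /eqP E'; rewrite E E'.
Qed.

Lemma isog x y : gdist (g x) (g y) = gdist x y.
Proof. by rewrite -iso !gK. Qed.

Lemma res_back (R : {set gvert n m}) : resolving (f @: R) -> resolving R.
Proof.
move=> H a b ab; have fab : f a != f b by apply: contra ab => /eqP /finj ->.
have [w' /imsetP [w wR ->]] := H _ _ fab.
by rewrite /resolves !iso => rw; exists w.
Qed.

Lemma res_fwd (R : {set gvert n m}) : resolving R -> resolving (f @: R).
Proof.
move=> H a b ab; have gab : g a != g b by apply: contra ab => /eqP /(can_inj gK) ->.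
have [w wR rw] := H _ _ gab; exists (f w); first exact: imset_f.
have e1 : forall c, gdist (f w) c = gdist w (g c) by move=> c; rewrite -iso gK.
by move: rw; rewrite /resolves !e1.
Qed.

Lemma kmin_back k (M : {set gvert n m}) : kminimal k (f @: M) -> kminimal k M.
Proof.
move=> [res card mn]; split.
- exact: res_back.
- by rewrite -card card_imset //; exact: finj.
- move=> x xM /res_fwd; rewrite imsetD1f; apply: mn; exact: imset_f.
Qed.

Lemma path_map (e : rel (gvert n m)) (e' : rel (gvert n' m')) :
  (forall x y, e x y -> e' (f x) (f y)) ->
  forall s x, path e x s -> path e' (f x) (map f s).
Proof.
move=> H; elim=> //= y s IH x /andP [exy p]; rewrite H //=; exact: IH.
Qed.

Lemma lsp_map (S : {set gvert n m} -> rel (gvert n m)) (S' : {set gvert n' m'} -> rel (gvert n' m')) (R : {set gvert n m}) (u v : gvert n m) :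
  (forall x y, S R x y -> S' (f @: R) (f x) (f y)) ->
  lsp_exists S R u v -> lsp_exists S' (f @: R) (f u) (f v).
Proof.
move=> H [uR vR [s /and3P [p /eqP l /eqP sz]]]; split; try exact: imset_f.
exists (map f s); rewrite /shortest_path_by (path_map H p) last_map l size_map sz iso !eqxx.
by [].
Qed.

End Transport.

Lemma minimal_transport n m n' m' (f : gvert n m -> gvert n' m') (g : gvert n' m' -> gvert n m)
  (fK : cancel f g) (gK : cancel g f) (iso : forall x y, gdist (f x) (f y) = gdist x y)
  (S : {set gvert n m} -> rel (gvert n m)) (S' : {set gvert n' m'} -> rel (gvert n' m'))
  (Hf : forall R x y, S R x y -> S' (f @: R) (f x) (f y))
  (Hg : forall R x y, S' R x y -> S (g @: R) (g x) (g y))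
  (M : {set gvert n m}) (u v : gvert n m) :
  lsp_exists S M u v -> (forall w, w \in M -> ~ lsp_exists S (M :\ w) u v) ->
  lsp_exists S' (f @: M) (f u) (f v) /\ (forall w, w \in f @: M -> ~ lsp_exists S' (f @: M :\ w) (f u) (f v)).
Proof.
move=> ex mn; split; first exact: (lsp_map iso (@Hf M) ex).
move=> w' /imsetP [w wM ->]; rewrite -(imsetD1f fK).
move=> /(lsp_map (isog gK iso) (@Hg (f @: (M :\ w)))); rewrite !fK.
have -> : g @: (f @: (M :\ w)) = M :\ w.
  by rewrite -imset_comp (eq_imset (g := id)) ?imset_id // => x /=; rewrite fK.
exact: mn.
Qed.


Lemma ex2_imset (T U : finType) (f : T -> U) (A : {set T}) (P : U -> U -> bool) :
  [exists x in f @: A, exists y in f @: A, P x y] = [exists x in A, exists y in A, P (f x) (f y)].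
Proof.
apply/existsP/existsP.
  move=> [x' /andP [/imsetP [x xA ->] /existsP [y' /andP [/imsetP [y yA ->] H]]]].
  by exists x; rewrite xA /=; apply/existsP; exists y; rewrite yA.
move=> [x /andP [xA /existsP [y /andP [yA H]]]].
exists (f x); rewrite imset_f //=; apply/existsP; exists (f y); by rewrite imset_f.
Qed.

Definition tr n m (x : gvert n m) : gvert m n := (x.2, x.1).
Arguments tr {n m}.
Lemma trK n m : cancel (@tr n m) (@tr m n). Proof. by case. Qed.
Lemma tr_iso n m (x y : gvert n m) : gdist (tr x) (tr y) = gdist x y.
Proof. by rewrite /gdist /= addnC. Qed.

Lemma tr_hv n m (R : {set gvert n m}) x y : hseg_step R x y -> vseg_step (tr @: R) (tr x) (tr y).
Proof. by rewrite /vseg_step /hseg_step ex2_imset ex2_imset /gadj tr_iso. Qed.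
Lemma tr_vh n m (R : {set gvert n m}) x y : vseg_step R x y -> hseg_step (tr @: R) (tr x) (tr y).
Proof. by rewrite /vseg_step /hseg_step ex2_imset ex2_imset /gadj tr_iso. Qed.

Lemma tr_opp n m (x y : gvert n m) : opp_sides (tr x) (tr y) = opp_sides x y.
Proof. by rewrite /opp_sides orbC. Qed.
Lemma tr_opph n m (x y : gvert n m) : opp_horiz_sides (tr x) (tr y) = opp_vert_sides x y.
Proof. by []. Qed.

Definition rc n m (x : gvert n m) : gvert n m := (rev_ord x.1, x.2).
Arguments rc {n m}.
Lemma rcK n m : involutive (@rc n m). Proof. by case=> a b; rewrite /rc /= rev_ordK. Qed.
Lemma rc_iso n m (x y : gvert n m) : gdist (rc x) (rc y) = gdist x y.
Proof.
rewrite /gdist /absd /=; have := ltn_ord x.1; have := ltn_ord y.1; lia.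
Qed.

Lemma min_rev n a b : minn (n - a.+1) (n - b.+1) = n - (maxn a b).+1.
Proof. lia. Qed.
Lemma max_rev n a b : maxn (n - a.+1) (n - b.+1) = n - (minn a b).+1.
Proof. lia. Qed.

Lemma rc_h n m (R : {set gvert n m}) x y : hseg_step R x y -> hseg_step (rc @: R) (rc x) (rc y).
Proof.
rewrite /hseg_step ex2_imset ex2_imset /gadj rc_iso => /andP [-> /=].
have b1 := ltn_ord x.1; have b2 := ltn_ord y.1.
case/orP => /andP [e /existsP [x' /andP [x'R /existsP [y' /andP [y'R H]]]]]; apply/orP.
  left; rewrite e /=; apply/existsP; exists x'; rewrite x'R /=; apply/existsP; exists y'; rewrite y'R /=.
  have b3 := ltn_ord x'.1; have b4 := ltn_ord y'.1.
  move: H => /and4P [-> -> H1 H2]; rewrite !min_rev !max_rev.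
  by rewrite /=; apply/andP; split; apply: leq_sub2l; rewrite ltnS.
right; apply/andP; split; first by move: e => /eqP e; apply/eqP => /=; lia.
apply/existsP; exists x'; rewrite x'R /=; apply/existsP; exists y'; rewrite y'R /=.
have b3 := ltn_ord x'.1; have b4 := ltn_ord y'.1.
move: H => /and3P [-> H1 H2]; rewrite !min_rev !max_rev.
by rewrite /=; apply/andP; split; apply: leq_sub2l; rewrite ltnS.
Qed.

Lemma rev0 n (i : 'I_n) : (n - i.+1 == 0) = (i == n.-1 :> nat).
Proof. have := ltn_ord i; case: eqP => h1; case: eqP => h2 // lt; exfalso; lia. Qed.
Lemma revN n (i : 'I_n) : (n - i.+1 == n.-1) = (i == 0 :> nat).
Proof. have := ltn_ord i; case: eqP => h1; case: eqP => h2 // lt; exfalso; lia. Qed.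

Lemma rc_opp n m (x y : gvert n m) : opp_sides (rc x) (rc y) = opp_sides x y.
Proof.
rewrite /opp_sides /opp_vert_sides /opp_horiz_sides /= !rev0 !revN.
by rewrite (andbC (x.1 == _ :> nat)) (andbC (x.1 == 0 :> nat)) (orbC (_ && _) (_ && _)).
Qed.


Lemma hlsp_rev n m (R : {set gvert n m}) u v : hlsp_exists R u v -> hlsp_exists R v u.
Proof.
move=> [uR vR [s /and3P [p /eqP l /eqP sz]]]; split => //.
exists (rev (belast u s)); apply/and3P; split.
- have E : (fun z => (hseg_step R)^~ z) =2 hseg_step R by move=> x y /=; exact: hseg_stepC.
  by rewrite -l rev_path (eq_path E).
- rewrite -l; case: s {p l sz} => //= y s; by rewrite rev_cons last_rcons.
- by rewrite size_rev size_belast sz gdistC.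
Qed.

Lemma minimal_rev n m (M : {set gvert n m}) u v : minimal_hlsp M u v -> minimal_hlsp M v u.
Proof.
move=> [e mn]; split; first exact: hlsp_rev.
by move=> w wM /hlsp_rev; apply: mn.
Qed.

Definition Hopp_of n m (M : {set gvert n m}) u v :=
  forall x y, x \in M -> y \in M -> opp_sides x y -> (x = u /\ y = v) \/ (x = v /\ y = u).

Lemma Hopp_map n m n' m' (f : gvert n m -> gvert n' m') (M : {set gvert n m}) u v :
  (forall x y, opp_sides (f x) (f y) = opp_sides x y) ->
  Hopp_of M u v -> Hopp_of (f @: M) (f u) (f v).
Proof.
move=> fo H x' y' /imsetP [x xM ->] /imsetP [y yM ->]; rewrite fo => o.
by case: (H x y xM yM o) => [[-> ->]|[-> ->]]; [left|right].
Qed.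

Lemma horiz_case n m (M : {set gvert n m}) u v : 2 < m -> opp_horiz_sides u v ->
  (u.1 != v.1 :> nat) -> Hopp_of M u v -> minimal_hlsp M u v -> kminimal #|M| M.
Proof.
move=> m2.
have main : forall u v : gvert n m, (u.2 : nat) = 0 -> (v.2 : nat) = m.-1 -> (u.1 != v.1 :> nat) ->
    Hopp_of M u v -> minimal_hlsp M u v -> kminimal #|M| M.
  move=> {}u {}v u0 vT uv Ho Hm.
  case: (ltngtP u.1 v.1) => c; last by rewrite c eqxx in uv.
    exact: (core_kmin u0 vT c m2 Ho Hm).
  apply: (kmin_back (@rcK n m) (@rcK n m) (@rc_iso n m)).
  rewrite -(card_imset M (can_inj (@rcK n m))).
  apply: (@core_kmin _ _ _ (rc u) (rc v)) => //.
  - rewrite /= ; have := ltn_ord u.1; have := ltn_ord v.1; lia.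
  - by apply: Hopp_map => //; exact: rc_opp.
  - exact: (minimal_transport (@rcK n m) (@rcK n m) (@rc_iso n m) (@rc_h n m) (@rc_h n m) Hm.1 Hm.2).
case/orP => /andP [/eqP u0 /eqP vT] uv Ho Hm.
  exact: (main u v u0 vT uv Ho Hm).
apply: (main v u) => //; first by rewrite eq_sym.
  by move=> x y xM yM o; case: (Ho x y xM yM o) => [[-> ->]|[-> ->]]; [right|left].
exact: minimal_rev.
Qed.

Lemma vert_case n m (M : {set gvert n m}) u v : 2 < n -> opp_vert_sides u v ->
  (u.2 != v.2 :> nat) -> Hopp_of M u v -> minimal_vlsp M u v -> kminimal #|M| M.
Proof.
move=> n2 ov uv Ho Hm.
apply: (kmin_back (@trK n m) (@trK m n) (@tr_iso n m)).
rewrite -(card_imset M (can_inj (@trK n m))).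
apply: (@horiz_case _ _ _ (tr u) (tr v)) => //.
- by apply: Hopp_map => //; exact: tr_opp.
- exact: (minimal_transport (@trK n m) (@trK m n) (@tr_iso n m) (@tr_vh n m) (@tr_hv m n) Hm.1 Hm.2).
Qed.

Theorem theorem4 (n m k : nat) (M : {set gvert n m}) :
  3 <= n -> 3 <= m -> #|M| = k -> 3 < k ->
  #|[set a in M | is_corner a]| <= 1 ->
  (exists u v : gvert n m,
     u \in M /\ v \in M /\ is_boundary u /\ is_boundary v /\
     opp_sides u v /\ ~~ same_line u v /\
     (forall x y, x \in M -> y \in M -> opp_sides x y ->
        (x = u /\ y = v) \/ (x = v /\ y = u)) /\
     (if opp_horiz_sides u v then minimal_hlsp M u v
      else minimal_vlsp M u v)) ->
  kminimal k M.
Proof.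
move=> n3 m3 <- _ _ [u [v [uM [vM [_ [_ [opp [nsl [Ho H]]]]]]]]].
move: nsl; rewrite /same_line negb_or => /andP [n1 n2].
case: ifP H => oh H.
  exact: (horiz_case m3 oh n1 Ho H).
apply: (vert_case n3 _ n2 Ho H).
by move: opp; rewrite /opp_sides oh orbF.
Qed.
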